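(* Let $\mathcal{B}=(v_1,\dots,v_N)$ with $v_1,\dots,v_N$ independent and uniform in $\mathbb{F}_2^n$. For $k\in\{1,\dots,n\}$ let $C^k\in\mathbb{F}_2^N$ be the $k$-th column, $C^k_j=(v_j)_k$, and define the equivalence relation $k\sim_{\mathcal B}j$ iff $C^k=C^j$ or $C^k=1-C^j$ (componentwise complement). Let $|I|$ be the number of equivalence classes of $\sim_{\mathcal B}$ on $\{1,\dots,n\}$. Then for $i=1,\dots,n$, $$\mathbb{P}(|I|=i)=\frac{1}{2^{(N-1)(n-i)}}\sum_{(n_1,\dots,n_i)\in S^i_{n-i}}\ \prod_{j=1}^i j^{n_j}\left(1-\frac{j-1}{2^{N-1}}\right),$$ where $S^i_m=\{(n_1,\dots,n_i)\in\mathbb{Z}^i: n_k\ge0,\ \sum_{j=1}^i n_j=m\}$. *)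

(* Defs.v *)
From mathcomp Require Import all_boot all_order all_algebra.
Set Implicit Arguments. Unset Strict Implicit. Unset Printing Implicit Defensive.
Import GRing.Theory Num.Theory.
Local Open Scope ring_scope.

(* A family B = (v_1,...,v_N) of vectors of F_2^n is the N x n matrix whose
   j-th row is v_j; its k-th column is C^k, with C^k_j = (v_j)_k. *)

Definition col_equiv (N n : nat) (B : 'M['F_2]_(N, n)) : rel 'I_n :=
  fun k j => (col k B == col j B) || (col k B == const_mx 1 - col j B).

Definition num_classes (N n : nat) (B : 'M['F_2]_(N, n)) : nat :=
  #|equivalence_partition (col_equiv B) [set: 'I_n]|.

(* P(|I| = i) when v_1,...,v_N are independent uniform in F_2^n, i.e. B is
   uniform on 'M['F_2]_(N, n). *)
Definition prob_num_classes (N n i : nat) : rat :=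
  (#|[set B : 'M['F_2]_(N, n) | num_classes B == i]|)%:R
  / (#|{: 'M['F_2]_(N, n)}|)%:R.

(* S^i_m = {(n_1,...,n_i) in Z^i : n_k >= 0, sum n_j = m}, represented by
   functions 'I_i -> 'I_(m+1) (each n_k <= m automatically). *)
Definition S_set (i m : nat) : {set {ffun 'I_i -> 'I_m.+1}} :=
  [set f : {ffun 'I_i -> 'I_m.+1} | (\sum_(k < i) (f k : nat))%N == m].

(* Main.v *)
Require Import Defs.
From mathcomp Require Import all_boot all_order all_algebra.
From mathcomp Require Import ring lra.
Set Implicit Arguments. Unset Strict Implicit. Unset Printing Implicit Defensive.
Import GRing.Theory Num.Theory.

Lemma card_set_sum (A : finType) (P : pred A) :
  #|[set x | P x]| = \sum_(x : A) (P x : nat).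
Proof. by rewrite -sum1_card big_mkcond /=; apply: eq_bigr => x _; rewrite inE; case: (P x). Qed.

Lemma card_bij (A B : finType) (phi : A -> B) (psi : B -> A) (P : pred B) :
  cancel phi psi -> cancel psi phi ->
  #|[set a | P (phi a)]| = #|[set b | P b]|.
Proof.
move=> K1 K2; rewrite -(card_imset _ (can_inj K2)); congr (#|pred_of_set _|).
apply/setP => a; rewrite inE; apply/idP/imsetP.
  by move=> Pa; exists (phi a); rewrite ?inE ?K1.
by case=> b; rewrite inE => Pb ->; rewrite K2.
Qed.

Section Count.
Variable T : finType.
Definition dimg n (g : {ffun 'I_n -> T}) := #|[set g k | k in 'I_n]|.
Definition Fc n i := \sum_(g : {ffun 'I_n -> T}) (dimg g == i : nat).

Lemma Fc0 i : Fc 0 i = (i == 0)%N.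
Proof.
rewrite /Fc (eq_bigr (fun _ => (i == 0 : nat))) ?sum_nat_const ?card_ffun ?card_ord ?mul1n //.
move=> g _; suff -> : dimg g = 0%N by rewrite eq_sym.
by apply/eqP; rewrite -leqn0 -[X in (_ <= X)%N](card_ord 0) leq_imset_card.
Qed.

Definition phiS n (g : {ffun 'I_n.+1 -> T}) : T * {ffun 'I_n -> T} :=
  (g ord0, [ffun k => g (lift ord0 k)]).
Definition psiS n (p : T * {ffun 'I_n -> T}) : {ffun 'I_n.+1 -> T} :=
  [ffun k => if unlift ord0 k is Some k' then p.2 k' else p.1].

Lemma phiSK n : cancel (@phiS n) (@psiS n).
Proof. by move=> g; apply/ffunP => k; rewrite ffunE /=; case: unliftP => [j|] ->; rewrite ?ffunE. Qed.
Lemma psiSK n : cancel (@psiS n) (@phiS n).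
Proof. by case=> x t; rewrite /phiS /= !ffunE unlift_none; congr pair; apply/ffunP => k; rewrite !ffunE liftK. Qed.

Lemma dimg_psi n x t : dimg (@psiS n (x, t)) = ((x \notin [set t k | k in 'I_n]) + dimg t)%N.
Proof.
rewrite /dimg -cardsU1; congr (#|pred_of_set _|); apply/setP => y; rewrite !inE.
apply/imsetP/predU1P.
  case=> k _ ->; rewrite ffunE; case: unliftP => [j|] _ /=; last by left.
  by right; apply/imsetP; exists j.
case=> [->|/imsetP[j _ ->]]; first by exists ord0; rewrite // ffunE unlift_none.
by exists (lift ord0 j); rewrite // ffunE liftK.
Qed.

Lemma FcS n i : Fc n.+1 i = (i * Fc n i + (#|T| - i.-1) * Fc n i.-1 * (0 < i))%N.
Proof.
rewrite /Fc (reindex (@psiS n)); last by exists (@phiS n) => g _; rewrite ?phiSK ?psiSK.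
rewrite /= -(pair_big predT predT (fun x t => (dimg (psiS (x, t)) == i : nat))) /=.
rewrite exchange_big /= mulnAC !big_distrr /= -big_split /=.

apply: eq_bigr => t _.
set A := [set t k | k in 'I_n].
rewrite (bigID (mem A)) /=.
rewrite (eq_bigr (fun _ => (dimg t == i : nat))); last by move=> x xA; rewrite dimg_psi xA.
rewrite [X in _ + X](eq_bigr (fun _ => (dimg t == i.-1) && (0 < i) : nat)); last first.
  move=> x xA; rewrite dimg_psi (negbTE xA) /= add1n.
  by case: i => [|i]; rewrite /= ?andbF ?eqSS ?andbT.
rewrite sum_nat_const (sum_nat_const [pred x | x \notin A]).
have cA : #|[pred x | x \notin A]| = (#|T| - #|A|)%N.
  by rewrite -(cardC (mem A)) addKn.
rewrite cA.
have -> : #|A| = dimg t by [].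
case: (eqVneq (dimg t) i) => [<-|ne].
  case: (dimg t) => [|d] /=; first by rewrite !muln0.
  by rewrite (gtn_eqF (ltnSn d)) !muln0.
rewrite !muln0 !add0n.
case: (eqVneq (dimg t) i.-1) => [e|]; last by rewrite !muln0 ?andbF.
case: i ne e => [|i] ne e /=; first by rewrite !muln0.
by rewrite e /= !muln1.
Qed.

Fixpoint hh (i m : nat) : nat :=
  if i is i'.+1 then \sum_(j < m.+1) (i'.+1 ^ j * hh i' (m - j))%N else (m == 0)%N.

Lemma hh_0 i : hh i 0 = 1%N.
Proof. by elim: i => //= i IH; rewrite big_ord1 IH. Qed.

Lemma hhS i m : hh i.+1 m.+1 = (i.+1 * hh i.+1 m + hh i m.+1)%N.
Proof.
rewrite /= big_ord_recl /= expn0 mul1n subn0 addnC; congr (_ + _)%N.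
rewrite big_distrr /=; apply: eq_bigr => j _.
by rewrite /bump /= add1n subSS expnS mulnA.
Qed.

Lemma Fc_closed n i : Fc n i = if (i <= n)%N then (hh i (n - i) * #|T| ^_ i)%N else 0%N.
Proof.
elim: n i => [|n IH] i.
  by rewrite Fc0; case: i.
rewrite FcS; case: i => [|i]; first by rewrite /= muln0 addn0 mul0n; case: n {IH}.
rewrite succnK !IH ltnS subSS !muln1.
case: (ltngtP i n) => [lt|gt|->].
- rewrite ltnS (ltnW lt).
  have -> : (n - i = (n - i.+1).+1)%N by rewrite subnSK.
  rewrite hhS ffactnSr. ring.
- by rewrite ltnS leqNgt gt /= !muln0.
- rewrite ltnS leqnn subnn muln0 add0n !hh_0 ffactnSr; ring.
Qed.

End Count.
Local Open Scope ring_scope.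


Section Poly.
Variable m : nat.
Definition pk (k : nat) : {poly rat} := \sum_(j < m.+1) ((k.+1)%:R ^+ j) *: 'X^j.

Lemma coef_pk k l : (pk k)`_l = if (l <= m)%N then (k.+1)%:R ^+ l else 0.
Proof.
rewrite /pk coef_sum.
under eq_bigr do rewrite coefZ coefXn.
case: ifP => lm.
  rewrite (bigD1 (Ordinal (lm : (l < m.+1)%N))) //= eqxx mulr1 big1 ?addr0 //.
  move=> j nj; have /negbTE -> : (l != j :> nat) by apply: contra nj => /eqP e; apply/eqP/val_inj.
  by rewrite mulr0.
rewrite big1 // => j _; case: eqP => [e|]; last by rewrite mulr0.
by move: (ltn_ord j); rewrite -e ltnS lm.
Qed.

Lemma coef_prod i l : (\prod_(k < i) pk k)`_l =
  \sum_(f : {ffun 'I_i -> 'I_m.+1} | (\sum_(k < i) (f k : nat))%N == l)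
     \prod_(k < i) (k.+1)%:R ^+ (f k : nat).
Proof.
rewrite /pk bigA_distr_bigA /= coef_sum [RHS]big_mkcond /=.
apply: eq_bigr => f _.
rewrite scaler_prod prodrXr coefZ coefXn.
by rewrite eq_sym; case: eqP => _; rewrite ?mulr1 ?mulr0.
Qed.

Lemma coef_prod_hh i l : (l <= m)%N -> (\prod_(k < i) pk k)`_l = (hh i l)%:R.
Proof.
elim: i l => [|i IH] l lm.
  by rewrite big_ord0 coef1 /=; case: (l == 0%N).
rewrite big_ord_recr coefM /= natr_sum.
rewrite (reindex_inj rev_ord_inj) /=.
apply: eq_bigr => j _.
have jl : (j <= l)%N by rewrite -ltnS.
rewrite subSS IH ?(leq_trans (leq_subr _ _) lm) // coef_pk (subKn jl) (leq_trans jl lm).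
by rewrite natrM natrX mulrC.
Qed.
End Poly.


Lemma Sset_hh i m : \sum_(f in S_set i m) \prod_(k < i) ((k.+1)%:R ^+ (f k : nat)) = (hh i m)%:R :> rat.
Proof.
rewrite -(@coef_prod_hh m i m (leqnn m)) coef_prod.
by apply: eq_bigl => f; rewrite inE.
Qed.
Lemma F2_cases (x : 'F_2) : x = 0 \/ x = 1.
Proof. case: x => [[|[|m]] Hm]; [left|right|]; try by apply/val_inj. done. Qed.
Lemma F2b' (x y u v : 'F_2) : (x + u == y + v) ==> (u != v) ==> (x == 1 - y).
Proof.
by case: (F2_cases x) => ->; case: (F2_cases y) => ->; case: (F2_cases u) => ->; case: (F2_cases v) => ->.
Qed.
Lemma F2b (x y u v : 'F_2) : x + u = y + v -> u != v -> x = 1 - y.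
Proof. by move=> /eqP e ne; move/implyP: (F2b' x y u v) => /(_ e)/implyP/(_ ne)/eqP. Qed.
Lemma F2c (x y : 'F_2) : (1 - x) + (1 - y) == x + y.
Proof. by case: (F2_cases x) => ->; case: (F2_cases y) => ->. Qed.
Lemma F2d (x y : 'F_2) : x + y + y == x.
Proof. by case: (F2_cases x) => ->; case: (F2_cases y) => ->. Qed.
Lemma F2e (x y : 'F_2) : (x != y) ==> (x == 1 - y).
Proof. by case: (F2_cases x) => ->; case: (F2_cases y) => ->. Qed.

Definition canon N' (c : 'cV['F_2]_N'.+1) : 'cV['F_2]_N' :=
  \col_j (c (lift ord0 j) 0 + c ord0 0).

Lemma equiv_canon N' (a b : 'cV['F_2]_N'.+1) :
  (a == b) || (a == const_mx 1 - b) = (canon a == canon b).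
Proof.
apply/idP/idP.
  case/orP => /eqP ->; first by [].
  by apply/eqP/matrixP => r c; rewrite !mxE; apply/eqP/F2c.
move/eqP => e.
have ee r : a (lift ord0 r) 0 + a ord0 0 = b (lift ord0 r) 0 + b ord0 0.
  by move/matrixP: e => /(_ r 0); rewrite !mxE.
case: (eqVneq (a ord0 0) (b ord0 0)) => [h|h].
  apply/orP; left; apply/eqP/matrixP => r c; rewrite (ord1 c).
  case: (unliftP ord0 r) => [r'|] ->; last exact: h.
  by have := ee r'; rewrite h => /addIr.
apply/orP; right; apply/eqP/matrixP => r c; rewrite (ord1 c) !mxE.
case: (unliftP ord0 r) => [r'|] ->; first exact: F2b (ee r') h.
by move/implyP: (F2e (a ord0 0) (b ord0 0)) => /(_ h)/eqP.
Qed.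

Lemma card_part (I U : finType) (R : rel I) (f : I -> U) (D : {set I}) :
  (forall x y, R x y = (f x == f y)) ->
  #|equivalence_partition R D| = #|f @: D|.
Proof.
move=> HR.
have -> : equivalence_partition R D = (fun v => [set y in D | f y == v]) @: (f @: D).
  rewrite -imset_comp; apply: eq_imset => x /=; apply/setP => y; rewrite !inE HR eq_sym.
  by [].
apply: card_in_imset => v1 v2 /imsetP[x1 x1D ->] /imsetP[x2 x2D ->] /setP /(_ x1).
by rewrite !inE x1D eqxx /= => /esym/eqP.
Qed.

Lemma num_classes_canon N' n (B : 'M['F_2]_(N'.+1, n)) :
  num_classes B = #|[set canon (col k B) | k in 'I_n]|.
Proof.
rewrite /num_classes (card_part (f := fun k => canon (col k B))).
  by congr (#|pred_of_set _|); apply/setP => v; apply/imsetP/imsetP => -[k _ ->]; exists k.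
by move=> x y; rewrite /col_equiv equiv_canon.
Qed.

Lemma count_classes N' n i :
  #|[set B : 'M['F_2]_(N'.+1, n) | num_classes B == i]| =
  (2 ^ n * Fc ('cV['F_2]_N') n i)%N.
Proof.
pose Phi (B : 'M['F_2]_(N'.+1, n)) :=
  ([ffun k => canon (col k B)], [ffun k => B ord0 k]).
pose Psi (p : {ffun 'I_n -> 'cV['F_2]_N'} * {ffun 'I_n -> 'F_2}) : 'M['F_2]_(N'.+1, n) :=
  \matrix_(r, k) (if unlift ord0 r is Some r' then p.1 k r' 0 + p.2 k else p.2 k).
have K1 : cancel Phi Psi.
  move=> B; apply/matrixP => r k; rewrite mxE /=.
  case: (unliftP ord0 r) => [r'|] ->; rewrite !ffunE //.
  by rewrite !mxE; apply/eqP/F2d.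
have K2 : cancel Psi Phi.
  case=> g s; rewrite /Phi; congr pair; apply/ffunP => k; rewrite ffunE.
    apply/matrixP => r c; rewrite (ord1 c) !mxE unlift_none liftK /=.
    by apply/eqP/F2d.
  by rewrite mxE unlift_none.
have -> : [set B : 'M['F_2]_(N'.+1, n) | num_classes B == i] =
          [set B | (fun p : {ffun 'I_n -> 'cV['F_2]_N'} * {ffun 'I_n -> 'F_2} =>
                       dimg p.1 == i) (Phi B)].
  apply/setP => B; rewrite !inE num_classes_canon /dimg /=.
  by congr (#|pred_of_set _| == i); apply: eq_imset => k; rewrite ffunE.
etransitivity; first exact: (@card_bij _ _ Phi Psi (fun p : {ffun 'I_n -> 'cV['F_2]_N'} * {ffun 'I_n -> 'F_2} => dimg p.1 == i) K1 K2).
have -> : [set p : {ffun 'I_n -> 'cV['F_2]_N'} * {ffun 'I_n -> 'F_2} | dimg p.1 == i] =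
          setX [set g | dimg g == i] setT.
  by apply/setP => -[g s]; rewrite !inE andbT.
rewrite cardsX cardsT card_ffun mulnC card_set_sum; congr (_ * _)%N.
exact: (congr2 expn (card_ord _) (card_ord n)).
Qed.

Lemma ffact_rat M i : (M ^_ i)%:R = \prod_(k < i) (M%:R - k%:R) :> rat.
Proof.
elim: i => [|i IH]; first by rewrite ffactn0 big_ord0.
rewrite ffactnSr natrM big_ord_recr /=.
case: (leqP i M) => h; first by rewrite natrB // IH.
by rewrite -IH ffact_small // !mul0r.
Qed.

Theorem theorem8p5 (N n i : nat) (hN : (1 <= N)%N) (hi1 : (1 <= i)%N)
    (hin : (i <= n)%N) :
  prob_num_classes N n i =
  1 / 2%:R ^+ ((N - 1) * (n - i)) *
  \sum_(f in S_set i (n - i))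
     \prod_(k < i) ((k.+1)%:R ^+ (f k : nat) *
                    (1 - (k.+1 - 1)%:R / 2%:R ^+ (N - 1))) :> rat.
Proof.
case: N hN => // N' _.
rewrite subn1 /=.
under eq_bigr do rewrite big_split /=.
rewrite -big_distrl /= Sset_hh.
set x : rat := 2%:R ^+ N'.
have x0 : x != 0 by rewrite expf_neq0 // pnatr_eq0.
have -> : \prod_(k < i) (1 - (k.+1 - 1)%:R / x) = ((2 ^ N') ^_ i)%:R / x ^+ i.
  rewrite ffact_rat natrX -/x.
  have -> : x ^+ i = \prod_(k < i) x by rewrite prodr_const card_ord.
  rewrite -prodf_div.
  apply: eq_bigr => k _; rewrite subn1 /=.
  by field.
rewrite /prob_num_classes count_classes Fc_closed hin card_mx card_Fp //.
rewrite card_mx card_Fp // muln1 natrM natrM natrX !natrX -/x.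
rewrite mulSn exprD !exprM -/x.
have -> : x ^+ n = x ^+ (n - i) * x ^+ i by rewrite -exprD subnK.
have y0 : (2%:R : rat) ^+ n != 0 by rewrite expf_neq0 // pnatr_eq0.
by field; rewrite y0 !expf_neq0.
Qed.
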